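(* Consider the controlled SEIR system described in the context, with stage cost weight $\lambda\in(0,1]$. There exists a constant $C\in\mathbb{R}_{\geq 0}$ such that $$J_{\infty}(\mathbf{x}^0,\mathbf{u}_{\mathrm{nom}})\leq C\quad\text{for all }\mathbf{x}^0\in\mathbb{X}_{\mathrm{M}},$$ where $\mathbf{u}_{\mathrm{nom}}\in\mathcal{U}_\infty$ denotes the constant input $\mathbf{u}_{\mathrm{nom}}(t)=(\beta_{\mathrm{nom}},\gamma_{\mathrm{nom}})^\top$ for all $t\ge 0$.
   Context: Parameters: $\eta>0$, $0<\beta_{\min}<\beta_{\mathrm{nom}}$, $0<\gamma_{\mathrm{nom}}<\gamma_{\max}$, $I_{\max}\in(0,1]$. State $\mathbf{x}=(x_1,x_2,x_3)^\top\in\mathbb{R}^3$ (susceptible, exposed, infectious proportions), input $\mathbf{u}=(u_1,u_2)^\top$, dynamics $\dot{\mathbf{x}}=f(\mathbf{x},\mathbf{u})$ with $f(\mathbf{x},\mathbf{u})=(-u_1x_1x_3,\; u_1x_1x_3-\eta x_2,\; \eta x_2-u_2x_3)^\top$. Input constraint set $\mathbb{U}=[\beta_{\min},\beta_{\mathrm{nom}}]\times[\gamma_{\mathrm{nom}},\gamma_{\max}]$; $\mathcal{U}_\infty$ is the set of Lebesgue measurable functions $[0,\infty)\to\mathbb{U}$. State constraint set $\mathbb{X}=\{\mathbf{x}\in[0,1]^3: x_3\le I_{\max},\ x_1+x_2+x_3\le 1\}$. For $\mathbf{x}^0\in[0,1]^3$ with $x_1^0+x_2^0+x_3^0\le1$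 and $\mathbf{u}\in\mathcal{U}_\infty$, $\mathbf{x}(t;\mathbf{x}^0,\mathbf{u})$ denotes the unique absolutely continuous solution (it stays in $[0,1]^3$). Let $\bar x_1=\gamma_{\mathrm{nom}}/\beta_{\mathrm{nom}}$, $\bar x_2=\gamma_{\mathrm{nom}}I_{\max}/\eta$ and $\mathbb{X}_{\mathrm{M}}=\{\mathbf{x}\in\mathbb{X}: x_1\le\bar x_1,\ x_2\le\bar x_2\}$. Stage cost, for fixed $\lambda\in(0,1]$: $\ell(\mathbf{x},\mathbf{u})=\lambda(x_2^2+x_3^2)+(1-\lambda)\|\mathbf{u}-\mathbf{u}_{\mathrm{nom}}\|^2$ with $\mathbf{u}_{\mathrm{nom}}=(\beta_{\mathrm{nom}},\gamma_{\mathrm{nom}})^\top$ and $\|\cdot\|$ the Euclidean norm. Cost functional $J_\infty(\mathbf{x}^0,\mathbf{u})=\int_0^\infty \ell(\mathbf{x}(s;\mathbf{x}^0,\mathbf{u}),\mathbf{u}(s))\,ds$. *)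

(* Defs.v *)
From HB Require Import structures.
From mathcomp Require Import all_boot all_order all_algebra.
From mathcomp Require Import all_classical all_reals all_analysis.
Set Implicit Arguments. Unset Strict Implicit. Unset Printing Implicit Defensive.
Import Order.TTheory GRing.Theory Num.Theory.
Import numFieldNormedType.Exports.
Local Open Scope classical_set_scope.
Local Open Scope ring_scope.

Definition in_X {R : realType} (Imax x1 x2 x3 : R) : Prop :=
  [/\ 0 <= x1 <= 1, 0 <= x2 <= 1, 0 <= x3 <= 1, x3 <= Imax & x1 + x2 + x3 <= 1].

Definition in_XM {R : realType} (eta bnom gnom Imax x1 x2 x3 : R) : Prop :=
  [/\ in_X Imax x1 x2 x3, x1 <= gnom / bnom & x2 <= gnom * Imax / eta].

Definition stage_cost {R : realType} (lam bnom gnom x2 x3 u1 u2 : R) : R :=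
  lam * (x2 ^+ 2 + x3 ^+ 2) + (1 - lam) * ((u1 - bnom) ^+ 2 + (u2 - gnom) ^+ 2).

Definition J_inf {R : realType} (lam bnom gnom : R) (x1 x2 x3 u1 u2 : R -> R)
  : \bar R :=
  (\int[@lebesgue_measure R]_(s in `[0%R, +oo[%classic)
     (stage_cost lam bnom gnom (x2 s) (x3 s) (u1 s) (u2 s))%:E)%E.

Definition seir_solution_const {R : realType} (eta b g x10 x20 x30 : R)
  (x1 x2 x3 : R -> R) : Prop :=
  [/\ x1 0 = x10, x2 0 = x20, x3 0 = x30,
      [/\ {within `[0%R, +oo[%classic, continuous x1},
          {within `[0%R, +oo[%classic, continuous x2} &
          {within `[0%R, +oo[%classic, continuous x3}] &
      forall t : R, 0 < t ->
        [/\ is_derive t 1 x1 (- b * x1 t * x3 t),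
            is_derive t 1 x2 (b * x1 t * x3 t - eta * x2 t) &
            is_derive t 1 x3 (eta * x2 t - g * x3 t)]].

(* Main.v *)
Require Import Defs.
From HB Require Import structures.
From mathcomp Require Import all_boot all_order all_algebra.
From mathcomp Require Import all_classical all_reals all_analysis.
From mathcomp Require Import ring lra.
From mathcomp Require Import measurable_realfun.
Import Order.TTheory GRing.Theory Num.Theory.
Import numFieldNormedType.Exports.
Local Open Scope classical_set_scope.
Local Open Scope ring_scope.

Section S.
Context {R : realType}.

Definition nm (y : R) : R := Num.min y 0.

Lemma nm_sq (y : R) : nm y ^+ 2 = y * nm y.
Proof. rewrite /nm; have [h|h] := leP y 0; [by rewrite expr2 | by rewrite expr0n mulr0]. Qed.

Lemma nm_le0 (y : R) : nm y <= 0.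
Proof. by rewrite /nm ge_min lexx orbT. Qed.

Lemma nm_ge (y : R) : nm y <= y.
Proof. by rewrite /nm ge_min lexx. Qed.

Lemma nm0 (y : R) : 0 <= y -> nm y = 0.
Proof. by move=> h; rewrite /nm; apply/min_idPr. Qed.

Lemma nm_eq0 (y : R) : nm y = 0 -> 0 <= y.
Proof. rewrite /nm; have [h|h] := leP y 0; [by move=> e; rewrite e in h * |by move=> _; apply: ltW]. Qed.

Lemma nm_cont : continuous nm.
Proof. move=> x; apply: (@continuous_min _ _ id (cst 0)) => //; exact: cvg_cst. Qed.

Lemma phi_is_derive (a : R) : is_derive a 1 (fun y => nm y ^+ 2) (2 * nm a).
Proof.
have [a0|a0|->] := ltgtP a 0.
- have h : is_derive a 1 (fun y : R => y ^+ 2) (2 * a).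
    have h0 : is_derive a 1 ((@id R) ^+ 2) ((2%:R * id a ^+ 1) *: 1) by exact: is_deriveX.
    have -> : (fun y : R => y ^+ 2) = (@id R) ^+ 2 by apply/funext => y.
    apply: (is_derive_eq h0).
    by rewrite expr1 [_ *: _]mulr1.
  rewrite /nm (min_idPl (ltW a0)).
  apply: near_eq_is_derive h.
  near=> y. rewrite /nm (min_idPl (ltW _)) //.
  near: y. exact: lt_nbhsl.
- have h : is_derive a 1 (cst (0:R)) 0 by exact: is_derive_cst.
  rewrite nm0 ?(ltW a0) // mulr0.
  apply: near_eq_is_derive h.
  near=> y. rewrite /cst nm0 ?expr0n //; rewrite -oppr_le0; apply: ltW.
  near: y. apply: Nlt_nbhsl; by rewrite oppr_lt0.
- rewrite nm0 // mulr0.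
  have hc : (fun h : R => h^-1 *: ((fun y => nm y ^+ 2) \o shift 0) (h *: 1) - h^-1 *: (nm 0 ^+ 2)) @ 0^' --> (0:R).
    apply: (@cvg_trans _ (nm h @[h --> 0^'])).
      apply: near_eq_cvg; near=> h.
      have E : (h%:A + 0 : R) = h by rewrite addr0 /GRing.scale/= mulr1.
      rewrite /comp /= E (@nm0 0 (lexx 0)) expr0n /= scaler0 subr0 nm_sq [_ *: _]mulrA mulVf ?mul1r //.
      near: h. exact: (@nbhs_dnbhs_neq R 0).
    have c := nm_cont 0; rewrite /continuous_at (@nm0 0 (lexx 0)) in c; exact: cvg_within_filter c.
  apply: DeriveDef.
    apply/cvg_ex; exists 0; move: hc; apply: cvg_trans; apply: near_eq_cvg; near=> h; by rewrite scalerBr.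
  rewrite /derive; apply: cvg_lim => //. move: hc; apply: cvg_trans; apply: near_eq_cvg; near=> h; by rewrite scalerBr.
Unshelve. all: by end_near. Qed.

Lemma prod_lb (M x1 x3 : R) : -M <= x1 <= M -> -M <= x3 <= M ->
  M * (nm x1 + nm x3) <= x1 * x3.
Proof.
move=> /andP[m1 M1] /andP[m3 M3]; rewrite /nm.
have [h1|h1] := leP x1 0; have [h3|h3] := leP x3 0; nra.
Qed.

Lemma key_ineq (b eta g M x1 x2 x3 : R) : 0 < b -> 0 < eta -> 0 < g ->
  -M <= x1 <= M -> -M <= x3 <= M ->
  2 * nm x1 * (- b * x1 * x3) + 2 * nm x2 * (b * x1 * x3 - eta * x2)
   + 2 * nm x3 * (eta * x2 - g * x3)
  <= (4 * b * M + 2 * eta) * (nm x1 ^+ 2 + nm x2 ^+ 2 + nm x3 ^+ 2).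
Proof.
move=> b0 e0 g0 hx1 hx3.
have P := @prod_lb M x1 x3 hx1 hx3.
move: hx1 hx3 => /andP[m1 M1] /andP[m3 M3].
have M0 : 0 <= M by lra.
have s1 := nm_sq x1; have s2 := nm_sq x2; have s3 := nm_sq x3.
have l1 := nm_le0 x1; have l2 := nm_le0 x2; have l3 := nm_le0 x3.
have g2 := nm_ge x2.
set a1 := nm x1 in P s1 l1 *; set a2 := nm x2 in s2 l2 g2 *; set a3 := nm x3 in P s3 l3 *.
have T1 : 2 * a1 * (- b * x1 * x3) <= 2 * b * M * a1 ^+ 2.
  have -> : 2 * a1 * (- b * x1 * x3) = - 2 * b * x3 * (x1 * a1) by ring.
  rewrite -s1. have : 0 <= b * a1 ^+ 2 by apply: mulr_ge0; [apply: ltW | apply: sqr_ge0].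
  move: (a1 ^+ 2) => q hq. nra.
have T2 : 2 * a2 * (b * x1 * x3 - eta * x2) <= b * M * (a1 ^+ 2 + 2 * a2 ^+ 2 + a3 ^+ 2).
  have -> : 2 * a2 * (b * x1 * x3 - eta * x2) = 2 * b * a2 * (x1 * x3) - 2 * eta * (x2 * a2) by ring.
  rewrite -s2.
  have h1 : 2 * b * a2 * (x1 * x3) <= 2 * b * a2 * (M * (a1 + a3)).
    have : 0 <= - (2 * b * a2) by nra. nra.
  have h2 : 2 * M * a2 * (a1 + a3) <= M * (a1 ^+ 2 + 2 * a2 ^+ 2 + a3 ^+ 2).
    have : 0 <= M * ((a1 - a2)^+2 + (a3 - a2)^+2) by rewrite mulr_ge0 // addr_ge0 ?sqr_ge0.
    nra.
  have h3 := ler_wpM2l (ltW b0) h2.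
  have : 0 <= eta * a2 ^+ 2 by apply: mulr_ge0; [apply: ltW | apply: sqr_ge0]. nra.
have T3 : 2 * a3 * (eta * x2 - g * x3) <= eta * (a2 ^+ 2 + a3 ^+ 2).
  have -> : 2 * a3 * (eta * x2 - g * x3) = 2 * eta * a3 * x2 - 2 * g * (x3 * a3) by ring.
  rewrite -s3.
  have h1 : 2 * eta * a3 * x2 <= 2 * eta * a3 * a2.
    have : 0 <= - (2 * eta * a3) by nra. nra.
  have : 0 <= (a2 - a3)^+2 by rewrite sqr_ge0. have : 0 <= a3 ^+ 2 by rewrite sqr_ge0. nra.
have bM : 0 <= b * M by apply: mulr_ge0 => //; apply: ltW.
have q1 : 0 <= b * M * a1 ^+ 2 by apply: mulr_ge0 => //; apply: sqr_ge0.
have q2 : 0 <= b * M * a2 ^+ 2 by apply: mulr_ge0 => //; apply: sqr_ge0.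
have q3 : 0 <= b * M * a3 ^+ 2 by apply: mulr_ge0 => //; apply: sqr_ge0.
have r1 : 0 <= eta * a1 ^+ 2 by apply: mulr_ge0; [apply: ltW | apply: sqr_ge0].
have r2 : 0 <= eta * a2 ^+ 2 by apply: mulr_ge0; [apply: ltW | apply: sqr_ge0].
have r3 : 0 <= eta * a3 ^+ 2 by apply: mulr_ge0; [apply: ltW | apply: sqr_ge0].
lra.
Qed.

Lemma phi_cont : continuous (fun y : R => nm y ^+ 2).
Proof. move=> y; apply/differentiable_continuous/derivable1_diffP; by case: (phi_is_derive y). Qed.

Lemma sq_nm_le0 (y : R) : nm y ^+ 2 <= 0 -> 0 <= y.
Proof. rewrite /nm; have [h|h] := leP y 0 => H; nra. Qed.

Lemma wc_comp (A : set R) (f h : R -> R) :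
  {within A, continuous f} -> continuous h -> {within A, continuous (h \o f)}.
Proof. move=> cf ch x; exact: (continuous_comp (cf x) (ch _)). Qed.

Lemma wc_add (A : set R) (f h : R -> R) :
  {within A, continuous f} -> {within A, continuous h} -> {within A, continuous (f + h)}.
Proof. move=> cf ch x; exact: (continuousD (cf x) (ch x)). Qed.

Lemma wc_mul (A : set R) (f h : R -> R) :
  {within A, continuous f} -> {within A, continuous h} -> {within A, continuous (f * h)}.
Proof. move=> cf ch x; exact: (continuousM (cf x) (ch x)). Qed.

Lemma wc_glob (A : set R) (f : R -> R) : continuous f -> {within A, continuous f}.
Proof. exact: continuous_subspaceT. Qed.

Lemma seir_nonneg (eta b g x10 x20 x30 : R) (x1 x2 x3 : R -> R) :
  0 < eta -> 0 < b -> 0 < g -> 0 <= x10 -> 0 <= x20 -> 0 <= x30 ->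
  seir_solution_const eta b g x10 x20 x30 x1 x2 x3 ->
  forall T, 0 <= T -> [/\ 0 <= x1 T, 0 <= x2 T & 0 <= x3 T].
Proof.
move=> e0 b0 g0 p1 p2 p3 [i1 i2 i3 [c1 c2 c3] dx] T T0.
have [->|TT] := eqVneq T 0; first by rewrite i1 i2 i3.
have Tp : 0 < T by rewrite lt_def TT T0.
have sub : `[0, T] `<=` `[0, +oo[.
  by move=> s /=; rewrite !in_itv /= => /andP[-> _].
have c1' := continuous_subspaceW sub c1.
have c2' := continuous_subspaceW sub c2.
have c3' := continuous_subspaceW sub c3.
have cf : {within `[0, T], continuous (((fun y : R => `|y|) \o x1) + ((fun y : R => `|y|) \o x3))}.
  apply: wc_add; apply: wc_comp => //; exact: norm_continuous.
have [M bd] : exists M : R, forall s, s \in `[0, T] ->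
    (- M <= x1 s <= M) /\ (- M <= x3 s <= M).
  have [c cT cmax] := EVT_max T0 cf.
  exists (`|x1 c| + `|x3 c|) => s sT.
  have h : `|x1 s| + `|x3 s| <= `|x1 c| + `|x3 c| := cmax s sT.
  have n1 := normr_ge0 (x1 s); have n3 := normr_ge0 (x3 s).
  have n1' := normr_ge0 (x1 c); have n3' := normr_ge0 (x3 c).
  split; rewrite -ler_norml; lra.
set phi := fun y : R => nm y ^+ 2.
set N := (phi \o x1) + (phi \o x2) + (phi \o x3).
set K := 4 * b * M + 2 * eta.
set E := expR \o (fun s : R => - K * s).
set G := N * E.
have dN (s : R) : 0 < s -> is_derive s 1 N
   (2 * nm (x1 s) * (- b * x1 s * x3 s) + 2 * nm (x2 s) * (b * x1 s * x3 s - eta * x2 s)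
   + 2 * nm (x3 s) * (eta * x2 s - g * x3 s)).
  move=> s0; have [d1 d2 d3] := dx s s0.
  have e1 := is_derive1_comp (phi_is_derive (x1 s)) d1.
  have e2 := is_derive1_comp (phi_is_derive (x2 s)) d2.
  have e3 := is_derive1_comp (phi_is_derive (x3 s)) d3.
  exact: is_deriveD (is_deriveD e1 e2) e3.
have dE (s : R) : is_derive s 1 E (expR (- K * s) * (- K)).
  have h : is_derive s 1 (fun s : R => - K * s) (- K).
    apply: is_derive_eq (is_deriveZ (- K) (is_derive_id s 1)) _.
    by rewrite [_ *: _]mulr1.
  exact: is_derive1_comp (is_derive_expR _) h.
have dG (s : R) : 0 < s -> is_derive s 1 G (N s *: (expR (- K * s) * (- K)) + E s *: 
   (2 * nm (x1 s) * (- b * x1 s * x3 s) + 2 * nm (x2 s) * (b * x1 s * x3 s - eta * x2 s)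
   + 2 * nm (x3 s) * (eta * x2 s - g * x3 s))).
  move=> s0; exact: is_deriveM (dN s s0) (dE s).
have Gle : {in `[0, T] &, {homo G : x y /~ x <= y}}.
  apply: ler0_derive1_le_cc.
  - move=> s; rewrite in_itv /= => /andP[s0 _]; by case: (dG s s0).
  - move=> s; rewrite in_itv /= => /andP[s0 sT]; rewrite derive1E.
    have [_ ->] := dG s s0.
    have sT' : s \in `[0, T] by rewrite in_itv /= (ltW s0) (ltW sT).
    have [h1 h3] := bd s sT'.
    have kk := @key_ineq b eta g M (x1 s) (x2 s) (x3 s) b0 e0 g0 h1 h3.
    have ep := expR_gt0 (- K * s).
    rewrite -/K in kk.
    set Nv := nm (x1 s) ^+ 2 + nm (x2 s) ^+ 2 + nm (x3 s) ^+ 2 in kk.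
    set D := (X in X <= _) in kk.
    set e := expR (- K * s) in ep *.
    change (Nv * (e * - K) + e * D <= 0).
    have hh : 0 <= e * (K * Nv - D) by apply: mulr_ge0; [exact: ltW | by rewrite subr_ge0].
    nra.
  - apply: wc_mul.
      apply: wc_add; [apply: wc_add|]; apply: wc_comp => //; exact: phi_cont.
    apply: wc_glob => y; apply/differentiable_continuous/derivable1_diffP.
    by case: (dE y).
have G0 : G 0 = 0.
  change ((phi (x1 0) + phi (x2 0) + phi (x3 0)) * E 0 = 0).
  by rewrite /phi i1 i2 i3 !nm0 // expr0n /= !addr0 mul0r.
have sT0 : 0 \in `[0, T] by rewrite in_itv /= lexx T0.
have sTT : T \in `[0, T] by rewrite in_itv /= lexx T0.
have := Gle T 0 sTT sT0 T0.
rewrite G0 => H.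
have ET : 0 < E T := expR_gt0 _.
have {}H : (nm (x1 T) ^+ 2 + nm (x2 T) ^+ 2 + nm (x3 T) ^+ 2) * E T <= 0 := H.
have q1 := sqr_ge0 (nm (x1 T)); have q2 := sqr_ge0 (nm (x2 T)); have q3 := sqr_ge0 (nm (x3 T)).
have HN : nm (x1 T) ^+ 2 + nm (x2 T) ^+ 2 + nm (x3 T) ^+ 2 <= 0.
  move: H ET; move: (E T) (nm (x1 T) ^+ 2 + nm (x2 T) ^+ 2 + nm (x3 T) ^+ 2) => e Nv H ET; nra.
split; apply: sq_nm_le0; lra.
Qed.

Lemma wc_cst (A : set R) (k : R) : {within A, continuous (cst k)}.
Proof. apply: wc_glob; exact: cst_continuous. Qed.

End S.

Theorem lemma2 (R : realType) (eta bmin bnom gnom gmax Imax lam : R) :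
  0 < eta -> 0 < bmin -> bmin < bnom -> 0 < gnom -> gnom < gmax ->
  0 < Imax -> Imax <= 1 -> 0 < lam -> lam <= 1 ->
  exists C : R, 0 <= C /\
    forall x10 x20 x30 : R, in_XM eta bnom gnom Imax x10 x20 x30 ->
    forall x1 x2 x3 : R -> R,
      seir_solution_const eta bnom gnom x10 x20 x30 x1 x2 x3 ->
      (J_inf lam bnom gnom x1 x2 x3 (fun _ => bnom) (fun _ => gnom) <= C%:E)%E.
Proof.
move=> e0 bm0 bmn g0 ggm I0 I1 l0 l1.
have b0 : 0 < bnom by apply: lt_trans bmn.
have ei0 : 0 < eta^-1 by rewrite invr_gt0.
have gi0 : 0 < gnom^-1 by rewrite invr_gt0.
exists (eta^-1 + gnom^-1); split; first by apply: addr_ge0; apply: ltW.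
move=> x10 x20 x30 [[/andP[a1 a1'] /andP[a2 a2'] /andP[a3 a3'] _ s1] _ _] x1 x2 x3 sol.
have pos := @seir_nonneg R eta bnom gnom x10 x20 x30 x1 x2 x3 e0 b0 g0 a1 a2 a3 sol.
move: (sol) => [i1 i2 i3 [c1 c2 c3] dx].
have dS (t : R) : 0 < t -> is_derive t 1 (x1 + x2 + x3) (- gnom * x3 t).
  move=> t0; have [d1 d2 d3] := dx t t0.
  apply: is_derive_eq (is_deriveD (is_deriveD d1 d2) d3) _.
  by ring.
have cS : {within `[0, +oo[, continuous (x1 + x2 + x3)} by apply: wc_add => //; exact: wc_add.
have Sle (t : R) : 0 <= t -> x1 t + x2 t + x3 t <= 1.
  move=> t0.
  have hd : forall s : R, s \in `]0, +oo[ -> derivable (x1 + x2 + x3) s 1.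
    move=> s; rewrite in_itv /= andbT => s0; by case: (dS s s0).
  have hd' : forall s : R, s \in `]0, +oo[ -> derive1 (x1 + x2 + x3) s <= 0.
    move=> s; rewrite in_itv /= andbT => s0; rewrite derive1E.
    have [_ ->] := dS s s0.
    have [_ _ p] := pos s (ltW s0).
    by rewrite mulNr oppr_le0; apply: mulr_ge0 => //; apply: ltW.
  have h := @ler0_derive1_nincry R (x1 + x2 + x3) 0 hd hd' cS 0 t (lexx 0) t0.
  have h' : x1 t + x2 t + x3 t <= x1 0 + x2 0 + x3 0 := h.
  rewrite i1 i2 i3 in h'; exact: le_trans h' s1.
have bnd (t : R) : 0 <= t -> [/\ 0 <= x1 t <= 1, 0 <= x2 t <= 1 & 0 <= x3 t <= 1].
  move=> t0; have [p1 p2 p3] := pos t t0; have := Sle t t0.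
  move=> h; split; apply/andP; split => //; lra.
set F := (x1 + x2) * cst (- eta^-1) + (x1 + x2 + x3) * cst (- gnom^-1).
have dF (t : R) : 0 < t -> is_derive t 1 F (x2 t + x3 t).
  move=> t0; have [d1 d2 d3] := dx t t0.
  have hE := is_deriveD d1 d2.
  have hS := is_deriveD (is_deriveD d1 d2) d3.
  have k1 : is_derive t 1 (cst (- eta^-1)) 0 := is_derive_cst _ _ _.
  have k2 : is_derive t 1 (cst (- gnom^-1)) 0 := is_derive_cst _ _ _.
  apply: is_derive_eq (is_deriveD (is_deriveM hE k1) (is_deriveM hS k2)) _.
  rewrite !scaler0 !add0r.
  change (- eta^-1 * (- bnom * x1 t * x3 t + (bnom * x1 t * x3 t - eta * x2 t)) +
    - gnom^-1 * (- bnom * x1 t * x3 t + (bnom * x1 t * x3 t - eta * x2 t) + (eta * x2 t - gnom * x3 t))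
    = x2 t + x3 t).
  field; apply/andP; split; rewrite gt_eqF //.
have cF : {within `[0, +oo[, continuous F}.
  apply: wc_add; apply: wc_mul; try exact: wc_cst.
    exact: wc_add.
  by apply: wc_add => //; exact: wc_add.
have Fnd (x y : R) : 0 <= x -> x <= y -> F x <= F y.
  move=> x0 xy.
  have hd : forall s : R, s \in `]0, +oo[ -> derivable F s 1.
    move=> s; rewrite in_itv /= andbT => s0; by case: (dF s s0).
  have hd' : forall s : R, s \in `]0, +oo[ -> 0 <= derive1 F s.
    move=> s; rewrite in_itv /= andbT => s0; rewrite derive1E.
    have [_ ->] := dF s s0.
    have [p1 p2 p3] := pos s (ltW s0).
    exact: addr_ge0.
  exact: (@ger0_derive1_ndecry R F 0 hd hd' cF x y x0 xy).
have Fle0 (x : R) : 0 <= x -> F x <= 0.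
  move=> x0; have [p1 p2 p3] := pos x x0.
  change ((x1 x + x2 x) * - eta^-1 + (x1 x + x2 x + x3 x) * - gnom^-1 <= 0).
  rewrite !mulrN -opprD oppr_le0.
  apply: addr_ge0; apply: mulr_ge0; try exact: ltW;
    by repeat apply: addr_ge0.
set Fm := fun t : R => F (Num.max t 0).
have Fmnd : nondecreasing_fun Fm.
  move=> x y xy; apply: Fnd; first by rewrite le_max lexx orbT.
  by rewrite ge_max le_max xy /= le_max lexx orbT.
have Fmub : has_ubound (range Fm).
  exists 0 => _ [x _ <-]; apply: Fle0; by rewrite le_max lexx orbT.
set l := sup (range Fm).
have Fl : F x @[x --> +oo] --> l.
  apply: cvg_trans (nondecreasing_cvgr Fmnd Fmub).
  apply: near_eq_cvg; near=> x.
  rewrite /Fm (max_idPl _) //.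
have lle0 : l <= 0.
  apply: ge_sup; first by exists (Fm 0), 0.
  move=> _ [x _ <-]; apply: Fle0; by rewrite le_max lexx orbT.
have f0 (x : R) : 0 <= x -> 0 <= (x2 + x3) x.
  move=> x0; have [_ p2 p3] := pos x x0; exact: addr_ge0.
have cf : {within `[0, +oo[, continuous (x2 + x3)} by apply: wc_add.
have dFd (x : R) : 0 < x -> derivable F x 1 by move=> x0; case: (dF x x0).
have Fa : F x @[x --> 0^'+] --> F 0 := ((continuous_within_itvcyP 0 F).1 cF).2.
have dFE : {in `]0, +oo[, derive1 F =1 (x2 + x3)}.
  move=> t; rewrite in_itv /= andbT => t0; rewrite derive1E.
  by have [_ ->] := dF t t0.
have ftc := @ge0_continuous_FTC2y R (x2 + x3) F 0 l f0 cf Fl dFd Fa dFE.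
have mD : measurable (`[0, +oo[%classic : set R) by exact: measurable_itv.
set k := (1 - lam) * ((bnom - bnom) ^+ 2 + (gnom - gnom) ^+ 2).
have costE : (fun s => stage_cost lam bnom gnom (x2 s) (x3 s) bnom gnom)
    = cst lam * (x2 * x2 + x3 * x3) + cst k.
  by apply/funext => s; rewrite /stage_cost /= !expr2.
have ccost : {within `[0, +oo[, continuous (fun s => stage_cost lam bnom gnom (x2 s) (x3 s) bnom gnom)}.
  rewrite costE; apply: wc_add; last exact: wc_cst.
  apply: wc_mul; first exact: wc_cst.
  by apply: wc_add; apply: wc_mul.
have k0 : k = 0 by rewrite /k !subrr expr0n /= addr0 mulr0.
rewrite /J_inf.
have Hf : (\int[lebesgue_measure]_(x in `[0%R, +oo[%classic) ((x2 + x3) x)%:E <= (eta^-1 + gnom^-1)%:E)%E.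
  rewrite ftc -EFinB lee_fin.
  have F0 : F 0 = (x10 + x20) * - eta^-1 + (x10 + x20 + x30) * - gnom^-1.
    by rewrite -i1 -i2 -i3.
  rewrite F0.
  have h1 : 0 <= (1 - (x10 + x20)) * eta^-1 by apply: mulr_ge0; [lra | exact: ltW].
  have h2 : 0 <= (1 - (x10 + x20 + x30)) * gnom^-1 by apply: mulr_ge0; [lra | exact: ltW].
  nra.
apply: (le_trans _ Hf).
  apply: ge0_le_integral => //.
  - move=> x; rewrite /= in_itv /= andbT => x0; rewrite lee_fin /stage_cost.
    rewrite !subrr expr0n /= addr0 mulr0 addr0.
    apply: mulr_ge0; first exact: ltW.
    by apply: addr_ge0; apply: sqr_ge0.
  - apply/measurable_EFinP.
    exact: (measurable_realfun.subspace_continuous_measurable_fun mD ccost).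
  - apply/measurable_EFinP.
    exact: (measurable_realfun.subspace_continuous_measurable_fun mD cf).
  - move=> x; rewrite /= in_itv /= andbT => x0; rewrite lee_fin /stage_cost.
    rewrite !subrr expr0n /= addr0 mulr0 addr0.
    have [_ /andP[p2 p2'] /andP[p3 p3']] := bnd x x0.
    have q2 : x2 x ^+ 2 <= x2 x by rewrite expr2; nra.
    have q3 : x3 x ^+ 2 <= x3 x by rewrite expr2; nra.
    have q : 0 <= x2 x ^+ 2 + x3 x ^+ 2 by apply: addr_ge0; apply: sqr_ge0.
    change (lam * (x2 x ^+ 2 + x3 x ^+ 2) <= x2 x + x3 x).
    move: q q2 q3; move: (x2 x ^+ 2) (x3 x ^+ 2) => u v q q2 q3.
    nra.
Unshelve. all: by end_near.
Qed.
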